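(* Let $p$ be a binary word of length $l$ all of whose runs have size at least $2$. Then $p$ has an internal zero at $n$ for every $n\ge l+1$.
   Context: $c_p(w)$ is the number of occurrences of $p$ as a (not necessarily consecutive) subsequence of $w$; $B_{n,p}(k)$ is the number of binary words of length $n$ with $c_p(w)=k$. A run is a maximal block of consecutive equal letters; its size is its length. $p$ has an internal zero at $n$ if there exist $0\le k_1<k_2<k_3$ with $B_{n,p}(k_1)\ne0$, $B_{n,p}(k_2)=0$, $B_{n,p}(k_3)\ne0$. *)

(* Defs.v *)
From mathcomp Require Import all_boot.
Set Implicit Arguments. Unset Strict Implicit. Unset Printing Implicit Defensive.

(* c_p(w): number of occurrences of p as a (not necessarily consecutive)
   subsequence of w, i.e. the number of choices of positions of w (selection
   masks m of length |w|) such that the selected letters spell p. *)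
Definition occ (p w : seq bool) : nat :=
  #|[set m : (size w).-tuple bool | mask m w == p]|.

Definition B (n : nat) (p : seq bool) (k : nat) : nat :=
  #|[set w : n.-tuple bool | occ p w == k]|.

Fixpoint runs_aux (b : bool) (c : nat) (s : seq bool) : seq nat :=
  match s with
  | [::] => [:: c]
  | x :: s' => if x == b then runs_aux b c.+1 s' else c :: runs_aux x 1 s'
  end.

Definition runs (s : seq bool) : seq nat :=
  match s with
  | [::] => [::]
  | x :: s' => runs_aux x 1 s'
  end.

Definition internal_zero (p : seq bool) (n : nat) : Prop :=
  exists k1 k2 k3, [/\ k1 < k2, k2 < k3,
    B n p k1 != 0, B n p k2 = 0 & B n p k3 != 0].

(* Main.v *)
Require Import Defs.
From mathcomp Require Import all_boot zify.
Set Implicit Arguments. Unset Strict Implicit.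

Lemma runs_aux_L0 x r : head (~~x) r != x -> 1 \in runs_aux x 1 r.
Proof.
case: r => [|z r] //= Hz.
by rewrite (negbTE Hz) in_cons.
Qed.

Lemma runs_aux_one q : forall b c x r, last b q != x -> head (~~x) r != x ->
  1 \in runs_aux b c (q ++ x :: r).
Proof.
elim: q => [|y q IH] b c x r /= Hl Hr.
  by rewrite eq_sym (negbTE Hl) in_cons runs_aux_L0 ?orbT.
case: eqP => [<-|_]; first exact: IH.
by rewrite in_cons IH ?orbT.
Qed.

Lemma runs_iso q x r : all (fun r => 2 <= r) (runs (q ++ x :: r)) ->
  (last (~~x) q == x) || (head (~~x) r == x).
Proof.
move=> H; apply/negPn/negP => /norP [Hl Hr].
have Hin : 1 \in runs (q ++ x :: r).
  clear H; case: q Hl => [|y q] /= Hl; first exact: runs_aux_L0.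
  exact: runs_aux_one.
by have := allP H 1 Hin.
Qed.

Lemma mask_head (m : bitseq) (s : seq bool) x r : size m = size s -> mask m s = x :: r ->
  exists v s' m', [/\ s = v ++ x :: s', m = nseq (size v) false ++ true :: m',
     size m' = size s' & mask m' s' = r].
Proof.
elim: s m => [|y s IH] [|b m] //= [Hs].
case: b => /=.
  case=> Hy Hr; by exists [::], s, m; rewrite Hy Hr.
move=> H; have [v [s' [m' [-> -> Hsz Hm]]]] := IH m Hs H.
by exists (y :: v), s', m'.
Qed.

Lemma mask_last (m : bitseq) (s : seq bool) x q : size m = size s -> mask m s = rcons q x ->
  exists s1 s2 m1, [/\ s = s1 ++ x :: s2, m = m1 ++ true :: nseq (size s2) false,
     size m1 = size s1 & mask m1 s1 = q].
Proof.
move=> Hs H.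
have H' : mask (rev m) (rev s) = x :: rev q by rewrite -rev_mask // H rev_rcons.
have [v [s' [m' [Es Em Hsz Hm]]]] := @mask_head _ _ _ _ (etrans (size_rev m) (etrans Hs (esym (size_rev s)))) H'.
exists (rev s'), (rev v), (rev m'); split.
- by rewrite -[s]revK Es rev_cat rev_cons cat_rcons.
- by rewrite -[m]revK Em rev_cat rev_cons cat_rcons rev_nseq size_rev.
- by rewrite !size_rev.
- by rewrite -rev_mask // Hm revK.
Qed.

Lemma first_diff (A B : bitseq) : size A = size B -> A != B ->
  exists u a A2 B2, A = u ++ a :: A2 /\ B = u ++ ~~ a :: B2.
Proof.
elim: A B => [|a A IH] [|b B] //= [Hs] Hne.
case: (eqVneq a b) => [Eab|Nab].
  move: Hne; rewrite -Eab eqseq_cons eqxx /= => Hne.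
  have [u [c [A2 [B2 [-> ->]]]]] := IH B Hs Hne.
  by exists (a :: u), c, A2, B2.
exists [::], a, A, B; split => //=.
by clear Hne; case: a b Nab => [] [].
Qed.

Lemma neq_at (u X Y : bitseq) a : u ++ a :: X != u ++ ~~ a :: Y.
Proof. by rewrite eqseq_cat // eqxx /= eqseq_cons; case: a. Qed.

Lemma last_ex (q : seq bool) x : last (~~ x) q == x -> exists q', q = rcons q' x.
Proof.
case/lastP: q => [|q' y] /=; first by case: x.
by rewrite last_rcons => /eqP ->; exists q'.
Qed.

Lemma head_ex (r : seq bool) x : head (~~ x) r == x -> exists r', r = x :: r'.
Proof.
case: r => [|y r] /=; first by case: x.
by move=> /eqP ->; exists r.
Qed.

Section Key.
Variable p : seq bool.
Hypothesis hp : all (fun r => 2 <= r) (runs p).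

Lemma key_ord (u A2 B2 : bitseq) (w : seq bool) :
  size (u ++ true :: A2) = size w -> size (u ++ false :: B2) = size w ->
  mask (u ++ true :: A2) w = p -> mask (u ++ false :: B2) w = p ->
  exists C : bitseq, [/\ size C = size w, mask C w = p,
     C != u ++ true :: A2 & C != u ++ false :: B2].
Proof.
move=> HA HB MA MB.
have Hw := cat_take_drop (size u) w.
set w1 := take (size u) w in Hw.
have Hsw1 : size u = size w1.
  rewrite /w1 size_take; move: (HA); rewrite size_cat /= => HA'.
  by rewrite ifT //; lia.
case Ed: (drop (size u) w) Hw => [|x w2] Hw.
  by move: HA; rewrite -Hw !size_cat Hsw1 /= => H; exfalso; lia.
rewrite -Hw in HA HB MA MB.
move: HA HB; rewrite !size_cat /= -Hsw1 => HA HB.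
have SA : size A2 = size w2 by lia.
have SB : size B2 = size w2 by lia.
rewrite mask_cat // in MA; rewrite mask_cat // in MB.
move: MA MB; rewrite /=.
set q := mask u w1; set r := mask A2 w2 => MA MB.
have Eq0 : mask u w1 = q by [].
have Er0 : mask A2 w2 = r by [].
clearbody q r.
have MB2 : mask B2 w2 = x :: r.
  have : q ++ mask B2 w2 = q ++ x :: r by rewrite MB MA.
  by move/eqP; rewrite eqseq_cat // eqxx /= => /eqP.
have [v [w3 [B3 [Ew2 EB2 SB3 MB3]]]] := @mask_head _ _ _ _ SB MB2.
have hp2 : all (fun r => 2 <= r) (runs (q ++ x :: r)) by rewrite MA.
case/orP: (@runs_iso _ _ _ hp2) => [Hl|Hh].
- have [q' Eq'] := last_ex Hl.
  rewrite Eq' in Eq0.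
  have [s1 [s2 [m1 [Ew1 Eu Sm1 Mm1]]]] := @mask_last _ _ _ _ Hsw1 Eq0.
  exists (m1 ++ false :: nseq (size s2) false ++ true :: B2); split.
  + move: Hsw1; rewrite -Hw Ew1 Eu !size_cat /= !size_cat /= size_nseq; lia.
  + rewrite -Hw Ew1 -MA Eq' -catA cat_cons mask_cat // /= mask_cat ?size_nseq //.
    by rewrite mask_false /= MB2 Mm1 cat_rcons.
  + rewrite Eu -catA cat_cons; exact: (neq_at _ _ _ false).
  + rewrite Eu -catA cat_cons; exact: (neq_at _ _ _ false).
- have [r' Er'] := head_ex Hh.
  rewrite Er' in MB3.
  have [v' [w4 [B4 [Ew3 EB3 SB4 MB4]]]] := @mask_head _ _ _ _ SB3 MB3.
  set C := u ++ true :: nseq (size v) false ++ false :: B3.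
  set F := u ++ true :: nseq (size v) false ++ true :: nseq (size v') false ++ false :: B4.
  have SC : size C = size w.
    move: SB3; rewrite /C -Hw Ew2 !size_cat /= !size_cat /= size_nseq; lia.
  have SF : size F = size w.
    move: SB4; rewrite /F -Hw Ew2 Ew3 !size_cat /= !size_cat /= !size_cat /= !size_nseq; lia.
  have MC : mask C w = p.
    rewrite /C -Hw -MA Er' mask_cat // /= Ew2 mask_cat ?size_nseq //.
    by rewrite mask_false /= MB3 Eq0.
  have MF : mask F w = p.
    rewrite /F -Hw -MA Er' mask_cat // /= Ew2 mask_cat ?size_nseq //.
    rewrite mask_false /= Ew3 mask_cat ?size_nseq //.
    by rewrite mask_false /= MB4 Eq0.
  have CF : C != F.
    rewrite /C /F eqseq_cat // eqxx /= eqseq_cons eqxx /= eqseq_cat ?size_nseq //.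
    by rewrite eqxx.
  have CB : C != u ++ false :: B2 by exact: (neq_at _ _ _ true).
  have FB : F != u ++ false :: B2 by exact: (neq_at _ _ _ true).
  case: (eqVneq C (u ++ true :: A2)) => [EC|NC].
    by exists F; split => //; rewrite -EC eq_sym.
  by exists C.
Qed.

Lemma key (A B : bitseq) (w : seq bool) :
  size A = size w -> size B = size w -> mask A w = p -> mask B w = p -> A != B ->
  exists C : bitseq, [/\ size C = size w, mask C w = p, C != A & C != B].
Proof.
move=> SA SB MA MB NAB.
have [u [a [A2 [B2 [EA EB]]]]] := first_diff (etrans SA (esym SB)) NAB.
subst A B; case: a SA MA SB MB NAB => /= SA MA SB MB _.
  exact: key_ord.
have [C [SC MC N1 N2]] := key_ord SB SA MB MA.
by exists C.
Qed.

Lemma occ_neq2 (w : seq bool) : occ p w != 2.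
Proof.
apply/negP => /cards2P [A [B [NAB ES]]].
have inA : A \in [set m : (size w).-tuple bool | mask m w == p] by rewrite ES !inE eqxx.
have inB : B \in [set m : (size w).-tuple bool | mask m w == p] by rewrite ES !inE eqxx orbT.
rewrite !inE in inA inB.
have [C [SC MC NA NB]] := key (size_tuple A) (size_tuple B) (eqP inA) (eqP inB) NAB.
have SC' : size C == size w by apply/eqP.
have : Tuple SC' \in [set m : (size w).-tuple bool | mask m w == p] by rewrite inE /= MC.
rewrite ES !inE => /orP [] /eqP E.
  by move: NA; rewrite -E eqxx.
by move: NB; rewrite -E eqxx.
Qed.
End Key.

Lemma occ_ge2 (p w m1 m2 : seq bool) : size m1 = size w -> size m2 = size w ->
  mask m1 w = p -> mask m2 w = p -> m1 != m2 -> 1 < occ p w.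
Proof.
move=> S1 S2 M1 M2 N.
have S1' : size m1 == size w by apply/eqP.
have S2' : size m2 == size w by apply/eqP.
have : [set Tuple S1'; Tuple S2'] \subset [set m : (size w).-tuple bool | mask m w == p].
  by apply/subsetP => m; rewrite !inE => /orP [] /eqP -> /=; rewrite ?M1 ?M2.
move/subset_leq_card; rewrite cards2.
have -> : (Tuple S1' != Tuple S2') = true by [].
by [].
Qed.

Unset Implicit Arguments.

Theorem mainTheorem11 (p : seq bool) :
  0 < size p ->
  all (fun r => 2 <= r) (runs p) ->
  forall n, size p < n -> internal_zero p n.
Proof.
move=> Hp hr n Hn.
case: p Hp hr Hn => [|x p'] // _ hr Hn.
set k := n - (size p').+2.
set w3 := x :: (x :: p') ++ nseq k x.
have Sw3 : size w3 == n by rewrite /w3 /= size_cat size_nseq /=; apply/eqP; rewrite /k; move: Hn => /= Hn; lia.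
set t3 : n.-tuple bool := Tuple Sw3.
have H2 : 1 < occ (x :: p') t3.
  apply: (@occ_ge2 _ _ (false :: nseq (size p').+1 true ++ nseq k false)
                       (true :: false :: nseq (size p') true ++ nseq k false)) => //=.
  - by rewrite !size_cat !size_nseq.
  - by rewrite !size_cat !size_nseq.
  - by rewrite mask_cat ?size_nseq // mask_true // mask_false cats0.
  - by rewrite mask_cat ?size_nseq // mask_true // mask_false cats0.
have H3 := @occ_neq2 _ hr t3.
exists 0, 2, (occ (x :: p') t3); split => //.
- by move: H3; case: (occ _ _) H2 => [|[|[|]]].
- rewrite /B cards_eq0; apply/set0Pn; exists (nseq_tuple n (~~ x)); rewrite inE.
  rewrite /occ cards_eq0; apply/eqP/setP => m; rewrite !inE; apply/negbTE/eqP => Hm.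
  have : x \in mask m (nseq_tuple n (~~ x)) by rewrite Hm mem_head.
  by move/mem_mask; rewrite /= mem_nseq => /andP [_]; case: (x).
- apply/eqP; rewrite cards_eq0; apply/eqP/setP => w; rewrite !inE.
  exact/negbTE/(@occ_neq2 _ hr w).
- by rewrite /B cards_eq0; apply/set0Pn; exists t3; rewrite inE.
Qed.
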